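(* Let $G$ be a finite, simple, connected $(n-3)$-regular graph of order $n\ge 5$. Then $\gamma_P(G)=1$ if and only if there exists an edge $uv\in E(G)$ such that $|N[v]\setminus N[u]|=1$.
   Context: For $U\subseteq V(G)$, $cl(U)$ is obtained by coloring $U$ black and repeatedly applying: if a black vertex has exactly one white neighbor, that neighbor becomes black. $S$ is a power dominating set if $cl(N[S])=V(G)$; $\gamma_P(G)$ is the minimum size of a power dominating set. *)

(* Defs.v *)
From mathcomp Require Import all_boot.
Set Implicit Arguments. Unset Strict Implicit. Unset Printing Implicit Defensive.

Section Graph.
Variables (T : finType) (e : rel T).

Definition simple_graph : Prop := symmetric e /\ irreflexive e.

Definition onbhd (v : T) : {set T} := [set w | e v w].
Definition cnbhd (v : T) : {set T} := v |: onbhd v.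
Definition cnbhd_set (S : {set T}) : {set T} := \bigcup_(v in S) cnbhd v.

(* one round of the colour-change rule: every white vertex that is the
   unique white neighbour of some black vertex becomes black *)
Definition force_step (B : {set T}) : {set T} :=
  B :|: [set w | [exists v in B, onbhd v :\: B == [set w]]].

(* cl(U): repeat the rule until it stabilises (#|T| rounds suffice since
   each effective round adds a vertex) *)
Definition closure (U : {set T}) : {set T} := iter #|T| force_step U.

Definition power_dominating (S : {set T}) : bool :=
  closure (cnbhd_set S) == [set: T].

(* gamma_P(G) : minimum size of a power dominating set; every set has size
   <= #|T| and [set: T] is power dominating, so #|T| is a neutral default *)
Definition power_domination_number : nat :=
  \big[minn/#|T|]_(S : {set T} | power_dominating S) #|S|.

Definition connected_graph : Prop := forall x y : T, connect e x y.

Definition regular (k : nat) : Prop := forall v : T, #|onbhd v| = k.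
End Graph.

(* Main.v *)
Require Import Defs.
From mathcomp Require Import all_boot.
From mathcomp Require Import zify.

Section Helpers.
Variables (T : finType) (e : rel T).

Lemma fs_sub (B : {set T}) : B \subset force_step e B.
Proof. by apply/subsetP => x xB; rewrite /force_step inE xB. Qed.

Lemma iter_fix (B : {set T}) k : force_step e B = B -> iter k (force_step e) B = B.
Proof. by move=> H; elim: k => [|k IH] //=; rewrite IH H. Qed.

Lemma fs_setT : force_step e setT = setT.
Proof. by apply/eqP; rewrite eqEsubset subsetT fs_sub. Qed.

Lemma bigmin_attained (P : pred {set T}) (F : {set T} -> nat) x0 m :
  \big[minn/x0]_(S | P S) F S = m -> m = x0 \/ exists S, P S /\ F S = m.
Proof.
move=> <-.
apply: (big_ind (fun k => k = x0 \/ exists S, P S /\ F S = k)).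
- by left.
- move=> x y Hx Hy; rewrite /minn; case: ifP => _; [exact Hx | exact Hy].
- by move=> i Pi; right; exists i.
Qed.

Lemma bigmin_le (r : seq {set T}) (P : pred {set T}) F x0 i :
  i \in r -> P i -> \big[minn/x0]_(j <- r | P j) F j <= F i.
Proof.
elim: r => [|j r IH] //; rewrite inE big_cons => /orP [/eqP <- | ir] Pi.
  by rewrite Pi geq_minl.
case: ifP => _; last exact: IH.
by rewrite geq_min IH ?orbT.
Qed.

End Helpers.

Theorem mainTheorem8 (T : finType) (e : rel T) :
  simple_graph e -> connected_graph e -> 5 <= #|T| ->
  regular e (#|T| - 3) ->
  (power_domination_number e = 1 <->
   exists u v : T, e u v /\ #|cnbhd e v :\: cnbhd e u| = 1).
Proof.
move=> [esym eirr] _ n5 reg.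
have nin v : v \notin onbhd e v by rewrite inE eirr.
have cardX u : #|~: cnbhd e u| = 2.
  have := cardsC (cnbhd e u); rewrite /cnbhd cardsU1 nin reg; lia.
have cnD v u : v \in cnbhd e u -> cnbhd e v :\: cnbhd e u = onbhd e v :\: cnbhd e u.
  move=> vu; apply/setP => y; rewrite !inE.
  case: (eqVneq y v) => [->|] //=; by move: vu; rewrite /cnbhd !inE => ->.
have cl_u u : cnbhd_set e [set u] = cnbhd e u by rewrite /cnbhd_set big_set1.
split.
- move=> /bigmin_attained [|[S [PS cS]]]; first lia.
  move/eqP: cS => /cards1P [u Su]; subst S.
  move: PS; rewrite /power_dominating cl_u => /eqP Hcl.
  case: (boolP (force_step e (cnbhd e u) \subset cnbhd e u)) => Hs.
    have Hf : force_step e (cnbhd e u) = cnbhd e u by apply/eqP; rewrite eqEsubset Hs fs_sub.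
    move: Hcl; rewrite /Defs.closure iter_fix // => Hc.
    by move: (cardX u); rewrite Hc setCT cards0.
  case/subsetPn: Hs => y; rewrite /force_step in_setU in_set => /orP [-> //|].
  case/exists_inP => w wB /eqP Hw yB.
  move: (wB) => /setU1P [wu | euw].
    move: Hw; rewrite wu => /setP /(_ y); rewrite !inE eqxx.
    by case: (e u y); rewrite ?orbT ?andbF.
    rewrite inE in euw.
  exists u, w; split => //.
  by rewrite cnD // Hw cards1.
- move=> [u [v [euv Hc]]].
  have Hd : 1 <= power_domination_number e.
    rewrite /power_domination_number.
    apply: (big_ind (fun k => 1 <= k)); first lia.
      by move=> x y; rewrite leq_min => -> ->.
    move=> S PS; rewrite lt0n; apply/negP => /eqP/eqP; rewrite cards_eq0 => /eqP S0.
    subst S; move: PS; rewrite /power_dominating /cnbhd_set big_set0 /Defs.closure iter_fix.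
      have /card_gt0P [t _] : 0 < #|T| by lia.
      by move/eqP/setP => /(_ t); rewrite !inE.
    apply/setP => y; rewrite /force_step !inE /=.
    by apply/existsP => [[w]]; rewrite inE.
  suff PD : power_dominating e [set u].
    have := @bigmin_le T (index_enum {set T}) (power_dominating e) (fun S => #|S|) #|T| [set u] (mem_index_enum _) PD.
    rewrite cards1 -/(power_domination_number e); lia.
  rewrite /power_dominating cl_u.
  move/eqP: Hc => /cards1P [x Hx].
  have vu : v \in cnbhd e u by rewrite /cnbhd !inE euv orbT.
  have xX : x \in ~: cnbhd e u.
    by move: Hx => /setP /(_ x); rewrite !inE eqxx => /andP [].
  have : #|~: cnbhd e u :\ x| == 1 by move: (cardX u); rewrite (cardsD1 x) xX; lia.
  case/cards1P => a Ha.
  have aX : a \in ~: cnbhd e u by move: Ha => /setP /(_ a); rewrite !inE eqxx => /andP [].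
  have Xy y : y \in ~: cnbhd e u -> y = x \/ y = a.
    move=> yX; case: (eqVneq y x) => [->|yx]; first by left.
    by right; apply/set1P; rewrite -Ha in_setD1 yx yX.
  set B1 := force_step e (cnbhd e u).
  have B1all y : y != a -> y \in B1.
    move=> ya; case: (boolP (y \in cnbhd e u)) => yu.
      by rewrite /B1 /force_step inE yu.
    have : y \in ~: cnbhd e u by rewrite inE.
    move/Xy => [yx|]; last by move/eqP; rewrite (negbTE ya).
    subst y; rewrite /B1 /force_step !inE; apply/orP; right.
    apply/exists_inP; exists v => //.
    by rewrite -cnD // Hx.
  have : 0 < #|onbhd e a| by rewrite reg; lia.
  case/card_gt0P => w; rewrite inE => eaw.
  have B2 : force_step e B1 = setT.
    apply/setP => y; rewrite in_setT.
    case: (eqVneq y a) => [->|ya]; last by apply: (subsetP (@fs_sub _ e _)); exact: B1all.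
    case: (boolP (a \in B1)) => aB1; first by apply: (subsetP (@fs_sub _ e _)).
    rewrite /force_step in_setU in_set; apply/orP; right; apply/exists_inP; exists w.
      by apply: B1all; apply/eqP => wa; subst w; rewrite eirr in eaw.
    apply/eqP/setP => z; rewrite in_setD in_set1 /onbhd in_set.
    case: (eqVneq z a) => [->|za]; first by rewrite aB1 esym eaw.
    by rewrite B1all.
  rewrite /Defs.closure -(subnK (leq_trans (isT : 2 <= 5) n5)) iterD /= -/B1 B2.
  by apply/eqP; apply: iter_fix; exact: fs_setT.
Qed.
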